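(* Let $N\ge2$ and let $(b,d)\in\mathbb{Z}^2$ be primitive with $N\nmid d$. Then there exists a sequence $v_0,\dots,v_k\in\mathbb{Z}^2$, $v_i=(b_i,d_i)$, with $v_0=(0,1)$, $v_k=(b,d)$, $b_{i}d_{i+1}-b_{i+1}d_{i}=1$ for $0\le i<k$, and $N\nmid d_i$ for all $0\le i\le k$. *)

(* Defs.v *)
From Stdlib Require Import ZArith.
Open Scope Z_scope.

Definition primitive (b d : Z) : Prop := Z.gcd b d = 1.

(* Main.v *)
Require Import Defs.
From Stdlib Require Import ZArith Znumtheory Lia Arith.
Open Scope Z_scope.

Definition R (N : Z) (w : Z * Z) : Prop :=
  exists (k : nat) (v : nat -> Z * Z),
    v 0%nat = (0, 1) /\ v k = w /\
    (forall i : nat, (i < k)%nat ->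
       fst (v i) * snd (v (S i)) - fst (v (S i)) * snd (v i) = 1) /\
    (forall i : nat, (i <= k)%nat -> ~ (N | snd (v i))).

Lemma R0 N : 2 <= N -> R N (0,1).
Proof.
  intros HN. exists 0%nat, (fun _ => (0,1)). repeat split; try (intros; lia).
  intros i _ H. simpl in H. apply Z.divide_pos_le in H; lia.
Qed.

Lemma Rstep N u w : R N u -> fst u * snd w - fst w * snd u = 1 ->
  ~ (N | snd w) -> R N w.
Proof.
  intros [k [v [H0 [Hk [Hs Hn]]]]] Hd Hw.
  exists (S k), (fun i => if Nat.eqb i (S k) then w else v i).
  simpl. repeat split.
  - destruct k; simpl; auto.
  - rewrite Nat.eqb_refl; auto.
  - intros i Hi. destruct (Nat.eqb_spec i (S k)); [lia|].
    destruct (Nat.eqb_spec (S i) (S k)).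
    + assert (i = k) by lia. subst i. rewrite Hk, Nat.eqb_refl. exact Hd.
    + replace (i =? k)%nat with false by (symmetry; apply Nat.eqb_neq; lia). apply Hs. lia.
  - intros i Hi. destruct (Nat.eqb_spec i (S k)); auto. apply Hn. lia.
Qed.

Lemma Rdown N b : R N (b,1) -> R N (b-1,1).
Proof. intros H. eapply Rstep; [exact H| cbn [fst snd]; lia|]. simpl.
  destruct H as [k [v [_ [Hk [_ Hn]]]]]. specialize (Hn k (le_n _)). rewrite Hk in Hn. exact Hn. Qed.

Lemma Rup N b : R N (b,1) -> R N (b+1,1).
Proof.
  intros H. assert (Hn1 : ~ (N | 1)).
  { destruct H as [k [v [_ [Hk [_ Hn]]]]]. specialize (Hn k (le_n _)). rewrite Hk in Hn. exact Hn. }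
  assert (Hm1 : ~ (N | -1)).
  { intro C. apply Hn1. apply Z.divide_opp_r in C. exact C. }
  assert (H1 : R N (-b-1,-1)) by (eapply Rstep; [exact H| cbn [fst snd]; lia| exact Hm1]).
  assert (H2 : R N (-b,-1)) by (eapply Rstep; [exact H1| cbn [fst snd]; lia| exact Hm1]).
  eapply Rstep; [exact H2| cbn [fst snd]; lia| exact Hn1].
Qed.

Lemma Rone N b : 2 <= N -> R N (b,1).
Proof.
  intros HN.
  assert (forall n : nat, R N (Z.of_nat n, 1) /\ R N (- Z.of_nat n, 1)).
  { induction n as [|n [IH1 IH2]].
    - simpl. split; apply R0; auto.
    - split.
      + replace (Z.of_nat (S n)) with (Z.of_nat n + 1) by lia. apply Rup; auto.
      + replace (- Z.of_nat (S n)) with (- Z.of_nat n - 1) by lia. apply Rdown; auto. }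
  destruct (Z_le_gt_dec 0 b).
  - replace b with (Z.of_nat (Z.to_nat b)) by lia. apply H.
  - replace b with (- Z.of_nat (Z.to_nat (-b))) by lia. apply H.
Qed.

Lemma Rmone N b : 2 <= N -> R N (b,-1).
Proof.
  intros HN. eapply Rstep; [apply (Rone N (-1-b) HN)| cbn [fst snd]; lia|].
  cbn [fst snd]. intro C. apply Z.divide_opp_r in C. apply Z.divide_pos_le in C; lia.
Qed.

Lemma Rall N : 2 <= N -> forall n : nat, forall b d, (Z.abs_nat d <= n)%nat ->
  Z.gcd b d = 1 -> ~ (N | d) -> R N (b,d).
Proof.
  intros HN n. induction n as [|n IH]; intros b d Hle Hg Hd.
  - assert (d = 0) by lia. subst. exfalso. apply Hd. apply Z.divide_0_r.
  - destruct (Z.eq_dec (Z.abs d) 1) as [E|E].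
    + destruct (Z.abs_spec d) as [[_ A]|[_ A]]; rewrite A in E.
      * subst. apply Rone; auto.
      * replace d with (-1) by lia. apply Rmone; auto.
    + assert (Hd0 : d <> 0) by (intro; subst; apply Hd; apply Z.divide_0_r).
      destruct (Z.gcd_bezout b d 1 Hg) as [u [v Huv]].
      set (q := (-u) / d). set (r := (-u) mod d).
      assert (Hdm : -u = d * q + r) by (apply Z.div_mod; auto).
      assert (Hr0 : r <> 0).
      { intro Z0. rewrite Z0 in Hdm.
        assert (d * (v - q * b) = 1) by nia.
        apply E. assert (Z.abs d * Z.abs (v - q*b) = 1) by (rewrite <- Z.abs_mul; lia).
        apply (Z.eq_mul_1_nonneg _ _ (Z.abs_nonneg d) H0). }
      assert (Hb : (0 < d /\ 0 <= r < d) \/ (d < 0 /\ d < r <= 0)).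
      { destruct (Z_lt_le_dec 0 d).
        - left. split; auto. apply Z.mod_pos_bound; lia.
        - right. split; [lia|]. apply Z.mod_neg_bound; lia. }
      assert (key : forall e f, f * d - b * e = 1 -> Z.abs e < Z.abs d -> ~ (N | e) -> R N (b,d)).
      { intros e f Hfe Hab He.
        apply (Rstep N (f,e) (b,d)); [| exact Hfe | exact Hd].
        apply IH; auto; [lia|].
        apply Z.bezout_1_gcd. exists d, (-b). lia. }
      destruct (Zdivide_dec N r) as [Dr|Dr].
      * destruct (Zdivide_dec N (r - d)) as [Dr2|Dr2].
        -- exfalso. apply Hd. replace d with (r - (r - d)) by lia.
           apply Z.divide_sub_r; auto.
        -- apply (key (r - d) (v - b * q - b)); auto; [nia| lia].
      * apply (key r (v - b * q)); auto; [nia| lia].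
Qed.

Theorem mainTheorem8 (N b d : Z) (HN : 2 <= N) (Hprim : primitive b d)
  (Hd : ~ (N | d)) :
  exists (k : nat) (v : nat -> Z * Z),
    v 0%nat = (0, 1) /\ v k = (b, d) /\
    (forall i : nat, (i < k)%nat ->
       fst (v i) * snd (v (S i)) - fst (v (S i)) * snd (v i) = 1) /\
    (forall i : nat, (i <= k)%nat -> ~ (N | snd (v i))).
Proof.
  exact (Rall N HN (Z.abs_nat d) b d (le_n _) Hprim Hd).
Qed.
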